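(* In the standing setup, assume in addition $2f\le n$. Let $T$ be a valid partial table. Then there exist a valid partial table $T'$ whose row sets $S'_i$ satisfy $|S'_i|=|S_i|$ for every $i\in\{1,\dots,f\}$, and pairwise distinct columns $b_1,\dots,b_f\in\{1,\dots,n\}$, such that for every $i$ for which $S'_i$ is not a basis of $M$ we have $T'(i,b_i)=\emptyset$.
   Context: Standing setup: $M$ is a matroid of rank $n$ on ground set $E$; $f\le n$ is a positive integer; for each $i\in\{1,\dots,f\}$ and $j\in\{1,\dots,n\}$, $B_{i,j}$ is a basis of $M$, and the sets $B_{i,j}$ are pairwise disjoint. A valid partial table $T$ assigns to each position $(i,j)\in[f]\times[n]$ either the symbol $\emptyset$ (the position is empty) or an element $T(i,j)\in B_{i,j}$, such that for every row $i$ the set $S_i=\{T(i,j):T(i,j)\ne\emptyset\}$ is independent and for every column $j$ the set $C_j=\{T(i,j):T(i,j)\neq\emptyset\}$ is independent. *)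

(* Defs.v *)
From mathcomp Require Import all_boot.
Set Implicit Arguments. Unset Strict Implicit. Unset Printing Implicit Defensive.

Definition is_matroid (E : finType) (indep : pred {set E}) : Prop :=
  [/\ indep set0,
      (forall A B : {set E}, A \subset B -> indep B -> indep A) &
      (forall A B : {set E}, indep A -> indep B -> #|A| < #|B| ->
         exists2 x, x \in B :\: A & indep (x |: A))].

Definition is_basis (E : finType) (indep : pred {set E}) (B : {set E}) : bool :=
  indep B && [forall x, (x \notin B) ==> ~~ indep (x |: B)].

Definition mrank (E : finType) (indep : pred {set E}) : nat :=
  \max_(A : {set E} | indep A) #|A|.

Definition table (E : finType) (f n : nat) := 'I_f -> 'I_n -> option E.

Definition row_set (E : finType) (f n : nat) (T : table E f n) (i : 'I_f) : {set E} :=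
  [set e | [exists j, T i j == Some e]].

Definition col_set (E : finType) (f n : nat) (T : table E f n) (j : 'I_n) : {set E} :=
  [set e | [exists i, T i j == Some e]].

Definition valid_table (E : finType) (indep : pred {set E}) (f n : nat)
    (B : 'I_f -> 'I_n -> {set E}) (T : table E f n) : Prop :=
  [/\ (forall i j e, T i j = Some e -> e \in B i j),
      (forall i, indep (row_set T i)) &
      (forall j, indep (col_set T j))].

(* Main.v *)
Require Import Defs.
From mathcomp Require Import all_boot.
Set Implicit Arguments. Unset Strict Implicit. Unset Printing Implicit Defensive.

Lemma m_indep_le (E : finType) (indep : pred {set E}) (A : {set E}) :
  indep A -> #|A| <= mrank indep.
Proof. move=> hA; exact: (@leq_bigmax_cond _ indep (fun A => #|A|) A). Qed.

Lemma m_exists_max (E : finType) (indep : pred {set E}) :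
  is_matroid indep -> exists2 A, indep A & #|A| = mrank indep.
Proof.
case=> h0 _ _.
have : 0 < #|[pred A : {set E} | indep A]|.
  by apply/card_gt0P; exists set0.
move/(eq_bigmax_cond (fun A : {set E} => #|A|)) => [A hA heq].
by exists A => //; rewrite /mrank heq.

Qed.

Lemma m_basis_card (E : finType) (indep : pred {set E}) (B : {set E}) :
  is_matroid indep -> is_basis indep B -> #|B| = mrank indep.
Proof.
move=> hM /andP[hB /forallP hmax].
apply/eqP; rewrite eqn_leq m_indep_le //=.
case: (m_exists_max hM) => A hA <-.
rewrite leqNgt; apply/negP => hlt.
case: hM => _ _ aug.
case: (aug _ _ hB hA hlt) => x /setDP[_ hxB] hx.
by move: (hmax x); rewrite hxB /= hx.
Qed.

Lemma m_bad_card (E : finType) (indep : pred {set E}) (Bs A : {set E}) :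
  is_matroid indep -> indep Bs -> indep A ->
  #|[set y in Bs | ~~ indep (y |: A)]| <= #|A|.
Proof.
move=> [_ sub aug] hB hA.
set D := [set y in Bs | _].
have hD : indep D by apply: (sub _ Bs) => //; apply/subsetP => y; rewrite inE => /andP[].
rewrite leqNgt; apply/negP => hlt.
case: (aug _ _ hA hD hlt) => x /setDP[hxD _] hx.
by move: hxD; rewrite inE hx andbF.
Qed.

Lemma m_augment (E : finType) (indep : pred {set E}) (A S : {set E}) :
  is_matroid indep -> indep A -> indep S -> #|A| <= #|S| ->
  exists I : {set E}, [/\ indep I, A \subset I, I \subset A :|: S & #|I| = #|S|].
Proof.
move=> hM; move: {2}(#|S| - #|A|) (erefl (#|S| - #|A|)) => k.
elim: k A => [|k IH] A hk hA hS hle.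
  exists A; split => //; first exact: subsetUl.
  by apply/eqP; rewrite eqn_leq hle -subn_eq0 hk.
have hlt : #|A| < #|S| by rewrite -subn_gt0 hk.
case: (hM) => _ _ aug.
case: (aug _ _ hA hS hlt) => x /setDP[hxS hxA] hx.
have hc : #|x |: A| = #|A|.+1 by rewrite cardsU1 hxA.
case: (IH (x |: A)) => //.
- by rewrite hc subnS hk.
- by rewrite hc.
move=> I [hI h1 h2 h3]; exists I; split => //.
- exact: subset_trans (subsetUr _ _) h1.
- apply: (subset_trans h2); apply/subsetP => y; rewrite !inE.
  by case/orP => [/orP[/eqP->|->]|->]; rewrite ?hxS ?orbT.
Qed.
From mathcomp Require Import zify.

Lemma disj_eq (E : finType) (f n : nat) (B : 'I_f -> 'I_n -> {set E})
  (i j i' j' : _) (e : E) :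
  (forall i j i' j', (i, j) != (i', j') -> [disjoint B i j & B i' j']) ->
  e \in B i j -> e \in B i' j' -> i = i' /\ j = j'.
Proof.
move=> hd h1 h2; case: (eqVneq (i, j) (i', j')) => [[-> ->] //|hne].
by rewrite (disjointFr (hd _ _ _ _ hne) h1) in h2.
Qed.

Lemma row_eq (E : finType) (f n : nat) (T T' : table E f n) i :
  T' i =1 T i -> row_set T' i = row_set T i.
Proof.
move=> h; apply/setP => e; rewrite !inE; apply/existsP/existsP => -[j hj];
by exists j; rewrite ?h // -h.
Qed.

Lemma row_full (E : finType) (f n : nat) (B : 'I_f -> 'I_n -> {set E})
  (T : table E f n) (i : 'I_f) (x0 : E) :
  (forall i j e, T i j = Some e -> e \in B i j) ->
  (forall i j i' j', (i, j) != (i', j') -> [disjoint B i j & B i' j']) ->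
  (forall j, T i j != None) -> n <= #|row_set T i|.
Proof.
move=> hTB hd hf.
pose g j := odflt x0 (T i j).
have ginj : injective g.
  move=> j j'; rewrite /g.
  case h: (T i j) (hf j) => [e|] // _; case h': (T i j') (hf j') => [e'|] // _ /= he.
  subst e'; have := disj_eq hd (hTB _ _ _ h) (hTB _ _ _ h'); by case.
have hn : #|g @: [set: 'I_n]| = n by rewrite card_imset // cardsT card_ord.
rewrite -[X in X <= _]hn.
apply: subset_leq_card; apply/subsetP => e /imsetP[j _ ->].
rewrite inE /g; case h: (T i j) (hf j) => [e'|] // _; apply/existsP; exists j; by rewrite h.
Qed.

Lemma col_card (E : finType) (f n : nat) (T : table E f n) (j : 'I_n) (x0 : E) :
  #|col_set T j| <= f.
Proof.
apply: (@leq_trans #|[set odflt x0 (T i j) | i : 'I_f]|); last first.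
  by apply: leq_trans (leq_imset_card _ _) _; rewrite card_ord.
apply: subset_leq_card; apply/subsetP => e; rewrite inE => /existsP[i /eqP h].
by apply/imsetP; exists i => //; rewrite h.
Qed.

Lemma W_card (E : finType) (f n : nat) (T : table E f n) i0 (U : {set 'I_n}) (x0 : E) :
  #|[set e | [exists j in U, T i0 j == Some e]]| <= #|U|.
Proof.
apply: (@leq_trans #|[set odflt x0 (T i0 j) | j in U]|); last exact: leq_imset_card.
apply: subset_leq_card; apply/subsetP => e; rewrite inE => /existsP[j /andP[hj /eqP h]].
by apply/imsetP; exists j => //; rewrite h.
Qed.

Lemma move_hole (E : finType) (indep : pred {set E}) (n f : nat)
  (B : 'I_f -> 'I_n -> {set E}) (T : table E f n) (i0 : 'I_f) (U : {set 'I_n}) (c : 'I_n) :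
  is_matroid indep -> mrank indep = n ->
  (forall i j, is_basis indep (B i j)) ->
  (forall i j i' j', (i, j) != (i', j') -> [disjoint B i j & B i' j']) ->
  valid_table indep B T ->
  T i0 c = None -> (forall j, j \notin U -> T i0 j != None) -> #|U| < n -> f + #|U| < n ->
  exists (T' : table E f n) (j0 : 'I_n),
    [/\ valid_table indep B T', j0 \notin U, T' i0 j0 = None,
        #|row_set T' i0| = #|row_set T i0| & forall i, i != i0 -> T' i =1 T i].
Proof.
move=> hM hr hB hd [hTB hrow hcol] hc hU hUn hfU.
have sub : forall A B0 : {set E}, A \subset B0 -> indep B0 -> indep A by case: hM.
set S := row_set T i0; set C := col_set T c.
set W := [set e | [exists j in U, T i0 j == Some e]].
have WS : W \subset S.
  apply/subsetP => e; rewrite !inE => /existsP[j /andP[_ h]]; apply/existsP; by exists j.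
have hW : indep W by apply: sub WS (hrow i0).
have hBc : #|B i0 c| = n by rewrite (m_basis_card hM (hB i0 c)).
have [x0 _] : exists x0, x0 \in B i0 c by apply/card_gt0P; rewrite hBc; apply: leq_ltn_trans hUn.
set bad1 := [set y in B i0 c | ~~ indep (y |: C)].
set bad2 := [set y in B i0 c | ~~ indep (y |: W)].
have hb1 : #|bad1| <= f.
  apply: leq_trans (m_bad_card hM _ (hcol c)) _; first by case/andP: (hB i0 c).
  exact: col_card x0.
have hb2 : #|bad2| <= #|U|.
  apply: leq_trans (m_bad_card hM _ hW) _; first by case/andP: (hB i0 c).
  exact: W_card x0.
have : ~~ (B i0 c \subset bad1 :|: bad2).
  apply/negP => /subset_leq_card; rewrite hBc => h.
  have := leq_trans h (leq_card_setU bad1 bad2).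
  move=> h2; have := leq_trans h2 (leq_add hb1 hb2); rewrite leqNgt hfU //.
move/subsetPn => [x hxB]; rewrite !inE hxB /= negb_or !negbK => /andP[hxC hxW].
have hxS : x \notin S.
  apply/negP; rewrite inE => /existsP[j /eqP hj].
  have [_ hjc] := disj_eq hd (hTB _ _ _ hj) hxB.
  by rewrite hjc hc in hj.
have [j1 _ hj1] : exists2 j1, j1 \in [set: 'I_n] & j1 \notin U.
  apply/subsetPn; apply/negP => /subset_leq_card; rewrite cardsT card_ord leqNgt hUn //.
case he1 : (T i0 j1) (hU _ hj1) => [e1|] // _.
have he1S : e1 \in S by rewrite inE; apply/existsP; exists j1; rewrite he1.
have he1W : e1 \notin W.
  apply/negP; rewrite inE => /existsP[j /andP[hjU /eqP hj]].
  have [_ hjj] := disj_eq hd (hTB _ _ _ hj) (hTB _ _ _ he1).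
  by subst j; rewrite hjU in hj1.
have hWS : #|W| < #|S|.
  apply: proper_card; rewrite properE WS /=; apply/subsetPn; by exists e1.
have hxW' : x \notin W by apply/negP => /(subsetP WS); rewrite (negbTE hxS).
have [I [hI h1 h2 h3]] : exists I : {set E}, [/\ indep I, x |: W \subset I, I \subset (x |: W) :|: S & #|I| = #|S|].
  by apply: m_augment hM hxW (hrow i0) _; rewrite cardsU1 hxW'.
have hxI : x \in I by apply: (subsetP h1); rewrite setU11.
have hIS : I \subset x |: S.
  apply: (subset_trans h2); apply/subsetP => y; rewrite !in_setU in_set1.
  case/orP => [/orP[->//|hy]|->]; last by rewrite orbT.
  by rewrite (subsetP WS _ hy) ?orbT.
have [d hdS hdI] : exists2 d, d \in S & d \notin I.
  apply/subsetPn; apply/negP => hSI.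
  have : x |: S \subset I by apply/subsetP => y; rewrite in_setU1 => /orP[/eqP->//|/(subsetP hSI)].
  by move/subset_leq_card; rewrite cardsU1 hxS h3 ltnn.
move: (hdS); rewrite inE => /existsP[j0 /eqP hj0].
have hj0U : j0 \notin U.
  apply/negP => hj0U.
  have : d \in x |: W by rewrite in_setU1 /W inE; apply/orP; right; apply/existsP; exists j0; rewrite hj0U hj0 eqxx.
  by move/(subsetP h1); rewrite (negbTE hdI).
have hj0c : j0 != c by apply/eqP => hj; rewrite hj hc in hj0.
pose T' : table E f n := fun i j => if i == i0 then
   (if j == c then Some x else if T i0 j is Some e then (if e \in I then Some e else None) else None)
   else T i j.
have rowI : row_set T' i0 = I.
  apply/setP => e; rewrite inE; apply/existsP/idP.
    move=> [j /eqP]; rewrite /T' eqxx; case: eqP => _; first by case=> <-.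
    by case h: (T i0 j) => [e'|] //; case: ifP => // he [<-].
  move=> he; have := subsetP hIS e he; rewrite in_setU1 => /orP[/eqP ->|].
    by exists c; rewrite /T' !eqxx.
  rewrite inE => /existsP[j /eqP hj]; exists j; rewrite /T' eqxx.
  case: (eqVneq j c) => [hjc|hjc]; first by rewrite hjc hc in hj.
  by rewrite hj he.
exists T', j0; split => //.
- split.
  + move=> i j e; rewrite /T'; case: eqP => [->|_]; last exact: hTB.
    case: eqP => [-> [<-] //|_].
    by case h: (T i0 j) => [e'|] //; case: ifP => // _ [<-]; exact: hTB h.
  + move=> i; case: (eqVneq i i0) => [->|hi]; first by rewrite rowI.
    by rewrite (@row_eq _ _ _ T) // => j; rewrite /T' (negbTE hi).
  + move=> j; case: (eqVneq j c) => [->|hjc].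
    * apply: sub hxC; apply/subsetP => e; rewrite inE => /existsP[i]; rewrite /T'.
      case: (eqVneq i i0) => [_|_]; first by rewrite eqxx => /eqP[<-]; rewrite setU11.
      by move=> h; rewrite setU1r // inE; apply/existsP; exists i.
    * apply: sub (hcol j); apply/subsetP => e; rewrite inE => /existsP[i]; rewrite /T'.
      case: (eqVneq i i0) => [hii|_] h; rewrite inE; apply/existsP.
        subst i; rewrite (negbTE hjc) in h.
        by case hT: (T i0 j) h => [e'|] //; case: ifP => // _ /eqP[<-]; exists i0; rewrite hT.
      by exists i.
- by rewrite /T' eqxx (negbTE hj0c) hj0 (negbTE hdI).
- by rewrite rowI h3.
- by move=> i hi j; rewrite /T' (negbTE hi).
Qed.

Theorem mainTheorem7 (E : finType) (indep : pred {set E}) (n f : nat)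
  (B : 'I_f -> 'I_n -> {set E}) (T : table E f n) :
  is_matroid indep ->
  mrank indep = n ->
  0 < f -> f <= n -> 2 * f <= n ->
  (forall i j, is_basis indep (B i j)) ->
  (forall i j i' j', (i, j) != (i', j') -> [disjoint B i j & B i' j']) ->
  valid_table indep B T ->
  exists T' : table E f n,
    [/\ valid_table indep B T',
        (forall i, #|row_set T' i| = #|row_set T i|) &
        exists b : 'I_f -> 'I_n,
          injective b /\
          (forall i, ~~ is_basis indep (row_set T' i) -> T' i (b i) = None)].
Proof.
move=> hM hr hf0 hfn h2f hB hd hv.
have hn0 : 0 < n by lia.
have main : forall k, k <= f -> exists (T' : table E f n) (b : 'I_f -> 'I_n),
  [/\ valid_table indep B T', forall i, #|row_set T' i| = #|row_set T i|,
      forall i i' : 'I_f, i < k -> i' < k -> b i = b i' -> i = i'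
    & forall i : 'I_f, i < k -> #|row_set T' i| < n -> T' i (b i) = None].
  elim=> [|k IH] hk.
    by exists T, (fun _ => Ordinal hn0); split.
  have [T1 [b1 [hv1 hs1 hinj1 hh1]]] := IH (ltnW hk).
  pose i0 : 'I_f := Ordinal hk.
  have ltk : forall i : 'I_f, i < k.+1 -> i != i0 -> i < k.
    move=> i hi hne; rewrite ltnS leq_eqVlt in hi; case/orP: hi => // /eqP hik.
    by case/eqP: hne; apply: val_inj.
  pose U := b1 @: [set~ i0].
  have hU : #|U| <= f.-1 by apply: leq_trans (leq_imset_card _ _) _; rewrite cardsC1 card_ord.
  have hUn : #|U| < n by lia.
  have hfU : f + #|U| < n by lia.
  have key : exists (T' : table E f n) (j : 'I_n),
     [/\ valid_table indep B T', forall i, i != i0 -> T' i =1 T1 i,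
         #|row_set T' i0| = #|row_set T1 i0|, j \notin U
       & #|row_set T' i0| < n -> T' i0 j = None].
    case E1: [exists j, (j \notin U) && ((n <= #|row_set T1 i0|) || (T1 i0 j == None))].
      move/existsP: E1 => [j /andP[hjU hj]]; exists T1, j; split => //.
      by move=> hlt; move: hj; rewrite leqNgt hlt /= => /eqP.
    have hall : forall j, j \notin U -> (#|row_set T1 i0| < n) && (T1 i0 j != None).
      by move=> j hj; move/negbT/existsPn/(_ j): E1; rewrite hj /= negb_or -ltnNge.
    have [j1 _ hj1] : exists2 j1, j1 \in [set: 'I_n] & j1 \notin U.
      apply/subsetPn; apply/negP => /subset_leq_card; rewrite cardsT card_ord leqNgt hUn //.
    have /andP[hlt hT1] := hall _ hj1.
    case hx0 : (T1 i0 j1) hT1 => [x0|] // _.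
    have [c hc] : exists c, T1 i0 c = None.
      case: (pickP (fun c => T1 i0 c == None)) => [c /eqP hc | hnone]; first by exists c.
      case: (hv1) => hTB _ _.
      have := row_full x0 hTB hd (fun j => negbT (hnone j)).
      by rewrite leqNgt hlt.
    have hUall : forall j, j \notin U -> T1 i0 j != None by move=> j /hall /andP[].
    have [T2 [j0 [hv2 hj0U hj0 hs2 heq]]] := move_hole hM hr hB hd hv1 hc hUall hUn hfU.
    by exists T2, j0; split => // => _.
  have [T' [j [hv' heq hs' hjU hj]]] := key.
  have hbU : forall i, i != i0 -> b1 i \in U by move=> i hi; apply/imsetP; exists i; rewrite // !inE.
  exists T', (fun i => if i == i0 then j else b1 i); split => //.
  - move=> i; case: (eqVneq i i0) => [->|hi]; first by rewrite hs' hs1.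
    by rewrite (row_eq (heq i hi)) hs1.
  - move=> i i' hi hi'.
    case: (eqVneq i i0) => [->|hne]; case: (eqVneq i' i0) => [->|hne'] //.
    + by move=> hb; move: hjU; rewrite hb hbU.
    + by move=> hb; move: hjU; rewrite -hb hbU.
    + by apply: hinj1; apply: ltk.
  - move=> i hi; case: (eqVneq i i0) => [->|hne]; first exact: hj.
    rewrite (row_eq (heq i hne)) (heq i hne); apply: hh1; exact: ltk.
have [T' [b [hv' hs' hinj hh]]] := main f (leqnn f).
exists T'; split => //; exists b; split.
  by move=> i i' h; apply: hinj.
move=> i hnb; apply: hh => //.
case: (hv') => _ hrow _.
have hle : #|row_set T' i| <= mrank indep by apply: m_indep_le.
rewrite hr in hle.
rewrite ltn_neqAle hle andbT; apply/negP => /eqP heq.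
case/negP: hnb; rewrite /is_basis hrow /=; apply/forallP => x; apply/implyP => hx.
apply/negP => hi; have := m_indep_le hi; rewrite cardsU1 hx heq hr ltnn //.
Qed.
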